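(* Let $\mathcal S$ be a trajectory set and fix $n\in\mathbb N$. Define for $S\in\mathcal S$ $$\tau(S):=\min\Big(\inf\{j\in\{1,\dots,n\}:\ \mathcal S_{(S,j-1)}\text{ is an arbitrage node of type I and }S_j\neq S_{j-1}\},\ n+1\Big)$$ (with $\inf\emptyset=+\infty$). Then: (i) for every $S\in\mathcal S$ and $i\in\{0,\dots,n\}$, if $\tau(S)>i$ then there exists $\tilde S\in\mathcal S\setminus\mathcal N_n$ with $(S_0,\dots,S_i)=(\tilde S_0,\dots,\tilde S_i)$; (ii) in the reduced trajectory set $\tilde{\mathcal S}:=\mathcal S\setminus\mathcal N_n$, for every $i\le n-1$ and $S\in\tilde{\mathcal S}$, the node $\tilde{\mathcal S}_{(S,i)}$ (computed in $\tilde{\mathcal S}$) is an up-down node if $\mathcal S_{(S,i)}$ is an up-down node in $\mathcal S$, and it is flat if $\mathcal S_{(S,i)}$ is flat or an arbitrage node of type I in $\mathcal S$.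
   Context: Fix $s_0\in\mathbb R$. A trajectory set is any set $\mathcal T$ of real sequences $S=(S_j)_{j\in\mathbb N_0}$ with $S_0=s_0$. For $S\in\mathcal T$ and $j\in\mathbb N_0$, the node (conditional space) is $\mathcal T_{(S,j)}=\{\tilde S\in\mathcal T:(\tilde S_0,\dots,\tilde S_j)=(S_0,\dots,S_j)\}$. The node $\mathcal T_{(S,j)}$ is an arbitrage node if there is $\varepsilon\in\{-1,1\}$ with $\varepsilon(\tilde S_{j+1}-S_j)\ge0$ for every $\tilde S\in\mathcal T_{(S,j)}$ and strict inequality for at least one $\tilde S\in\mathcal T_{(S,j)}$; an arbitrage node is of type I if some $S'\in\mathcal T_{(S,j)}$ has $S'_{j+1}=S_j$, and of type II otherwise. The node is flat if $\tilde S_{j+1}=S_j$ for every $\tilde S\in\mathcal T_{(S,j)}$, and up-down if it is neither flat nor an arbitrage node. For $n\in\mathbb N$, $\mathcal N_n:=\{S\in\mathcal S:\ \mathcal S_{(S,j)}\text{ is an arbitrage node of type I and }S_{j+1}\ne S_j\text{ for some }j\le n-1\}$. *)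

(* Defs.v *)
From Stdlib Require Import Reals.
Open Scope R_scope.

Definition traj := nat -> R.

Definition is_traj_set (s0 : R) (T : traj -> Prop) : Prop :=
  forall S, T S -> S 0%nat = s0.

Definition node (T : traj -> Prop) (S : traj) (j : nat) : traj -> Prop :=
  fun S' => T S' /\ (forall k, (k <= j)%nat -> S' k = S k).

Definition arb_node (T : traj -> Prop) (S : traj) (j : nat) : Prop :=
  exists eps : R, (eps = 1 \/ eps = -1) /\
    (forall S', node T S j S' -> 0 <= eps * (S' (j + 1)%nat - S j)) /\
    (exists S', node T S j S' /\ 0 < eps * (S' (j + 1)%nat - S j)).

Definition arb_node_I (T : traj -> Prop) (S : traj) (j : nat) : Prop :=
  arb_node T S j /\ exists S', node T S j S' /\ S' (j + 1)%nat = S j.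

Definition arb_node_II (T : traj -> Prop) (S : traj) (j : nat) : Prop :=
  arb_node T S j /\ ~ (exists S', node T S j S' /\ S' (j + 1)%nat = S j).

Definition flat_node (T : traj -> Prop) (S : traj) (j : nat) : Prop :=
  forall S', node T S j S' -> S' (j + 1)%nat = S j.

Definition updown_node (T : traj -> Prop) (S : traj) (j : nat) : Prop :=
  ~ flat_node T S j /\ ~ arb_node T S j.

Definition N_set (T : traj -> Prop) (n : nat) : traj -> Prop :=
  fun S => T S /\ exists j, (j < n)%nat /\ arb_node_I T S j /\ S (j + 1)%nat <> S j.

Definition reduced (T : traj -> Prop) (n : nat) : traj -> Prop :=
  fun S => T S /\ ~ N_set T n S.

(* "tau(S) > i" where
   tau(S) = min(inf{j in 1..n : T_(S,j-1) arbitrage node of type I and S_j <> S_(j-1)}, n+1).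
   For i <= n this holds iff no such j satisfies j <= i. *)
Definition tau_gt (T : traj -> Prop) (n : nat) (S : traj) (i : nat) : Prop :=
  forall j, (1 <= j)%nat -> (j <= n)%nat -> (j <= i)%nat ->
    ~ (arb_node_I T S (j - 1) /\ S j <> S (j - 1)%nat).

(* Main.v *)
Require Import Defs.
From Stdlib Require Import Reals Lia Lra Classical.
Open Scope R_scope.

Lemma node_ext T A B j : (forall k, (k<=j)%nat -> A k = B k) ->
  forall X, node T A j X -> node T B j X.
Proof. intros H X [HX HXk]; split; auto. intros k hk; rewrite HXk by auto; auto. Qed.

Lemma arbI_ext T A B j : (forall k, (k<=j)%nat -> A k = B k) ->
  arb_node_I T A j -> arb_node_I T B j.
Proof.
  intros H [[eps [He [Hall [X [HX Hs]]]]] [Y [HY HYe]]].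
  assert (Hj: A j = B j) by auto.
  assert (H' : forall k, (k<=j)%nat -> B k = A k) by (intros; symmetry; auto).
  split. exists eps; split; [auto|split].
  - intros X' HX'. rewrite <- Hj. apply Hall. apply (node_ext _ _ _ _ H' _ HX').
  - exists X; split. apply (node_ext _ _ _ _ H _ HX). rewrite <- Hj; auto.
  - exists Y; split. apply (node_ext _ _ _ _ H _ HY). rewrite <- Hj; auto.
Qed.

Lemma part1 T n : forall X i, T X -> (i <= n)%nat -> tau_gt T n X i ->
  exists X', reduced T n X' /\ (forall k, (k <= i)%nat -> X k = X' k).
Proof.
  intros X i HX Hin Htau.
  assert (Gen: forall m, (i <= m <= n)%nat -> exists Y, T Y /\
     (forall k, (k<=i)%nat -> X k = Y k) /\
     forall j, (j<m)%nat -> ~(arb_node_I T Y j /\ Y (j+1)%nat <> Y j)).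
  { intros m Hm. induction m as [|m IH].
    - exists X. split; auto. split; auto. intros; lia.
    - destruct (Nat.eq_dec i (S m)) as [Ei|Ei].
      + exists X. split; auto. split; auto. intros j Hj.
        pose proof (Htau (j+1)%nat ltac:(lia) ltac:(lia) ltac:(lia)) as Ht.
        replace (j+1-1)%nat with j in Ht by lia. exact Ht.
      + destruct (IH ltac:(lia)) as [Y [HY [HYa HYj]]].
        destruct (classic (arb_node_I T Y m)) as [Ha|Ha].
        * destruct Ha as [_ [Z [[HZ HZk] HZe]]].
          exists Z. split; auto. split.
          { intros k hk. rewrite HYa by auto. rewrite HZk by lia. auto. }
          intros j Hj [HA Hne].
          destruct (Nat.eq_dec j m) as [->|Hjm].
          { apply Hne. rewrite HZe. rewrite HZk by lia. auto. }
          apply (HYj j ltac:(lia)). split.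
          { apply (arbI_ext T Z Y j); auto. intros k hk; apply HZk; lia. }
          rewrite <- (HZk (j+1)%nat) by lia. rewrite <- (HZk j) by lia. auto.
        * exists Y. split; auto. split; auto. intros j Hj.
          destruct (Nat.eq_dec j m) as [->|Hjm].
          { intros [HA _]; auto. }
          apply HYj; lia. }
  destruct (Gen n ltac:(lia)) as [Y [HY [HYa HYj]]].
  exists Y. split; auto. split; auto.
  intros [_ [j [Hj [HA Hne]]]]. apply (HYj j Hj); auto.
Qed.

Theorem proposition5p5 (s0 : R) (T : traj -> Prop) (n : nat)
  (HT : is_traj_set s0 T) :
  (forall (S : traj) (i : nat), T S -> (i <= n)%nat -> tau_gt T n S i ->
     exists S', reduced T n S' /\ (forall k, (k <= i)%nat -> S k = S' k)) /\
  (forall (i : nat) (S : traj), (i < n)%nat -> reduced T n S ->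
     (updown_node T S i -> updown_node (reduced T n) S i) /\
     (flat_node T S i \/ arb_node_I T S i -> flat_node (reduced T n) S i)).
Proof.
  split. { intros; eapply part1; eauto. }
  intros i X Hi [HX HXN]. split.
  - intros [Hnf Hna].
    assert (Ext: forall Y, node T X i Y -> exists Z, node (reduced T n) X i Z /\
               Z (i+1)%nat = Y (i+1)%nat).
    { intros Y [HY HYk].
      destruct (part1 T n Y (i+1)%nat HY ltac:(lia)) as [Z [HZ HZk]].
      - intros j H1 H2 H3 [HA Hne].
        destruct (Nat.eq_dec j (i+1)%nat) as [->|Hj].
        + apply Hna. replace (i+1-1)%nat with i in HA by lia.
          apply (arbI_ext T Y X i) in HA. destruct HA; auto.
          intros; apply HYk; auto.
        + apply HXN. split; auto. exists (j-1)%nat. split; [lia|]. split.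
          * apply (arbI_ext T Y X); auto. intros; apply HYk; lia.
          * replace (j-1+1)%nat with j by lia.
            rewrite <- (HYk j) by lia. rewrite <- (HYk (j-1)%nat) by lia. auto.
      - exists Z. split.
        + split; auto. intros k hk. rewrite <- HZk by lia. apply HYk; auto.
        + symmetry; apply HZk; lia. }
    assert (Up: exists Y, node T X i Y /\ Y (i+1)%nat > X i).
    { apply NNPP; intro Nu. apply Hnf. intros Y HY. apply NNPP; intro Ne.
      apply Hna. exists (-1). split; [auto|split].
      - intros Y' HY'. destruct (Rle_or_lt (Y' (i+1)%nat) (X i)); [lra|].
        exfalso; apply Nu; eauto.
      - exists Y; split; auto. destruct (Rle_or_lt (Y (i+1)%nat) (X i)).
        + assert (Y (i+1)%nat <> X i) by auto. lra.
        + exfalso; apply Nu; eauto. }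
    assert (Dn: exists Y, node T X i Y /\ Y (i+1)%nat < X i).
    { apply NNPP; intro Nu. apply Hnf. intros Y HY. apply NNPP; intro Ne.
      apply Hna. exists 1. split; [auto|split].
      - intros Y' HY'. destruct (Rle_or_lt (X i) (Y' (i+1)%nat)); [lra|].
        exfalso; apply Nu; eauto.
      - exists Y; split; auto. destruct (Rle_or_lt (X i) (Y (i+1)%nat)).
        + assert (Y (i+1)%nat <> X i) by auto. lra.
        + exfalso; apply Nu; eauto. }
    destruct Up as [Yu [HYu Hu]]. destruct (Ext _ HYu) as [Zu [HZu Eu]].
    destruct Dn as [Yd [HYd Hd]]. destruct (Ext _ HYd) as [Zd [HZd Ed]].
    split.
    + intro F. specialize (F _ HZu). lra.
    + intros [eps [[->| ->] [Hall _]]].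
      * specialize (Hall _ HZd). lra.
      * specialize (Hall _ HZu). lra.
  - intros [Hf|Ha] Y [[HY HYN] HYk].
    + apply Hf. split; auto.
    + apply NNPP; intro Ne. apply HYN. split; auto. exists i. split; auto.
      split.
      * apply (arbI_ext T X Y); auto. intros; symmetry; auto.
      * rewrite (HYk i) by lia. auto.
Qed.
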